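(* Let $[Z_i(\tau_i,u_i)]_{i=1}^N$ be per-agent return distributions with quantile functions $\theta_i(\tau_i,u_i,\omega)$, let $k_1,\dots,k_N\ge0$ be constants not depending on the joint action $\boldsymbol u$, and let $Z_{jt}(\boldsymbol\tau,\boldsymbol u)$ be a joint return distribution (e.g. represented as a mixture of Dirac masses $\sum_{j=1}^J p_j(\boldsymbol\tau,\boldsymbol u,\omega_j)\delta_{\theta(\boldsymbol\tau,\boldsymbol u,\omega_j)}$) whose quantile function is $$\theta(\boldsymbol\tau,\boldsymbol u,\omega)=\sum_{i=1}^N k_i\,\theta_i(\tau_i,u_i,\omega),\qquad \omega\in(0,1].$$ Let $\psi_\alpha$ be either a Value-at-Risk metric $\mathrm{VaR}_\alpha$ or a distortion risk measure (e.g. CVaR, Wang, CPW). Then $[Z_i]_{i=1}^N$ satisfy the RIGM principle for $Z_{jt}$ with risk metric $\psi_\alpha$, i.e. $\arg\max_{\boldsymbol u}\psi_\alpha[Z_{jt}(\boldsymbol\tau,\boldsymbol u)]=(\arg\max_{u_1}\psi_\alpha[Z_1(\tau_1,u_1)],\dots,\arg\max_{u_N}\psi_\alpha[Z_N(\tau_N,u_N)])$.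
   Context: There are $N$ agents; agent $i$ has observation history $\tau_i$ and a finite action set $U_i$; $\boldsymbol\tau=(\tau_1,\dots,\tau_N)$, $\boldsymbol u=(u_1,\dots,u_N)$. For a real random variable $Z$ with CDF $F_Z$, its quantile function is $\theta_Z(\omega)=\inf\{z\in\mathbb{R}:\omega\le F_Z(z)\}$, $\omega\in(0,1]$. $\mathrm{VaR}_\alpha(Z)=\theta_Z(\alpha)$. A distortion risk measure with differentiable distortion function $g:[0,1]\to[0,1]$ is $\psi(Z)=\int_0^1 g'(\omega)\theta_Z(\omega)\,d\omega$ (integrals assumed finite); examples: CVaR with $g(\omega)=\min(\omega/\alpha,1)$, Wang with $g(\omega)=\Phi_{\mathcal N}(\Phi_{\mathcal N}^{-1}(\omega)+\alpha)$ ($\Phi_{\mathcal N}$ the standard Gaussian CDF), CPW with $g(\omega)=\omega^\alpha/(\omega^\alpha+(1-\omega)^\alpha)^{1/\alpha}$. RIGM principle: as in the displayed equality of the claim. Standing assumption of the paper: argmax sets are singletons (ties broken by smallest index). *)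

(* Defs.v *)
From HB Require Import structures.
From mathcomp Require Import all_boot all_order all_algebra.
From mathcomp Require Import all_classical all_reals all_analysis.
Set Implicit Arguments. Unset Strict Implicit. Unset Printing Implicit Defensive.
Import Order.TTheory GRing.Theory Num.Theory.
Import numFieldNormedType.Exports.
Local Open Scope classical_set_scope.
Local Open Scope ring_scope.

Section RiskDefs.
Variable R : realType.

(* A real random variable is represented by its law, a probability measure on R. *)
Definition cdf_of (P : probability R R) (z : R) : R := fine (P [set` `]-oo, z]%R]).

Definition quantile (P : probability R R) (w : R) : R :=
  inf [set z : R | w <= cdf_of P z].

Definition VaR (alpha : R) (P : probability R R) : R := quantile P alpha.

Definition distortion_risk (g : R -> R) (P : probability R R) : R :=
  Rintegral lebesgue_measure [set` `]0, 1]%R] (fun w : R => derive1 g w * quantile P w).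

Definition distortion_function (g : R -> R) : Prop :=
  [/\ (forall w, 0 <= w <= 1 -> 0 <= g w <= 1),
      (forall w, 0 < w < 1 -> derivable g w 1),
      {in `[0, 1]%R &, {homo g : x y / x <= y}},
      g 0 = 0 & g 1 = 1].

Inductive risk_metric :=
  | RM_VaR of R
  | RM_distortion of (R -> R).

Definition psi (rm : risk_metric) (P : probability R R) : R :=
  match rm with
  | RM_VaR alpha => VaR alpha P
  | RM_distortion g => distortion_risk g P
  end.

Definition valid_metric (rm : risk_metric) : Prop :=
  match rm with
  | RM_VaR alpha => 0 < alpha <= 1
  | RM_distortion g => distortion_function g
  end.

Definition finite_risk (rm : risk_metric) (P : probability R R) : Prop :=
  match rm with
  | RM_VaR _ => True
  | RM_distortion g =>
      lebesgue_measure.-integrable [set` `]0, 1]%R]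
        (fun w => (derive1 g w * quantile P w)%:E)
  end.

End RiskDefs.

Definition argmax_set (R : realType) (A : Type) (f : A -> R) : set A :=
  [set x | forall y, f y <= f x].

(* Main.v *)
Require Import Defs.
From HB Require Import structures.
From mathcomp Require Import all_boot all_order all_algebra.
From mathcomp Require Import all_classical all_reals all_analysis.
Import Order.TTheory GRing.Theory Num.Theory.
Local Open Scope classical_set_scope.
Local Open Scope ring_scope.

Lemma Rintegral_sum_seq (R : realType) (I : Type) (D : set R) (s : seq I)
  (F : I -> R -> R) : measurable D ->
  (forall i, lebesgue_measure.-integrable D (EFin \o F i)) ->
  Rintegral lebesgue_measure D (fun x => \sum_(i <- s) F i x) =
  \sum_(i <- s) Rintegral lebesgue_measure D (F i).
Proof.
move=> mD hF; elim: s => [|a s IH].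
  rewrite big_nil.
  under eq_Rintegral do rewrite big_nil.
  by rewrite Rintegral_cst // mul0r.
rewrite big_cons -IH.
under eq_Rintegral do rewrite big_cons.
apply: RintegralD => //.
have hs : lebesgue_measure.-integrable D (fun x => (\sum_(i <- s) (EFin \o F i) x)%E).
  apply: integrable_sum; first exact: mD.
  by move=> i _; exact: hF.
move: hs; apply: eq_integrable; first exact: mD.
by move=> x _ /=; rewrite sumEFin.
Qed.

Theorem theorem4 (R : realType) (N : nat)
  (Tau : 'I_N -> Type) (U : 'I_N -> finType)
  (Z : forall i : 'I_N, Tau i -> U i -> probability R R)
  (k : 'I_N -> R) (hk : forall i, 0 <= k i)
  (Zjt : (forall i, Tau i) -> (forall i, U i) -> probability R R)
  (hquant : forall (tau : forall i, Tau i) (u : forall i, U i) (w : R),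
      0 < w <= 1 ->
      quantile (Zjt tau u) w = \sum_(i < N) k i * quantile (Z i (tau i) (u i)) w)
  (rm : risk_metric R) (hrm : valid_metric rm)
  (hfin : forall i (t : Tau i) (a : U i), finite_risk rm (Z i t a))
  (tau : forall i, Tau i) (ustar : forall i, U i)
  (hind : forall i,
      argmax_set (fun a : U i => psi rm (Z i (tau i) a)) = [set ustar i])
  (hjt : exists u0 : (forall i, U i),
      argmax_set (fun u => psi rm (Zjt tau u)) = [set u0]) :
  argmax_set (fun u : (forall i, U i) => psi rm (Zjt tau u)) = [set ustar].
Proof.
have hsum : forall u : (forall i, U i),
    psi rm (Zjt tau u) = \sum_(i < N) k i * psi rm (Z i (tau i) (u i)).
  move=> u; clear hind hjt; case: rm hrm hfin => [alpha|g] /= ha hf.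
    by rewrite /VaR hquant.
  rewrite /distortion_risk.
  transitivity (Rintegral lebesgue_measure [set` `]0, 1]%R] (fun w => \sum_(i < N)
     k i * (derive1 g w * quantile (Z i (tau i) (u i)) w))).
    apply: eq_Rintegral.
    move=> w; rewrite inE /= in_itv /= => /andP[w0 w1].
    rewrite hquant ?w0 ?w1 // mulr_sumr; apply: eq_bigr => i _.
    by rewrite mulrCA.
  rewrite Rintegral_sum_seq //.
    apply: eq_bigr => i _; rewrite RintegralZl //.
    exact: hf.
  move=> i /=.
  have hi : lebesgue_measure.-integrable [set` `]0, 1]%R]
     (fun x => (k i)%:E * (derive1 g x * quantile (Z i (tau i) (u i)) x)%:E)%E.
    by apply: integrableZl; [exact: measurable_itv | exact: hf].
  by move: hi; apply: eq_integrable => // x _ /=.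
have hmax : forall i a, psi rm (Z i (tau i) a) <= psi rm (Z i (tau i) (ustar i)).
  move=> i a.
  have : [set ustar i] (ustar i) by [].
  by rewrite -hind => /(_ a).
have hs : argmax_set (fun u : (forall i, U i) => psi rm (Zjt tau u)) ustar.
  move=> y /=; rewrite !hsum; apply: ler_sum => i _.
  by apply: ler_wpM2l => //; exact: hmax.
case: hjt => u0 h0.
have e : ustar = u0.
  have hs' := hs; rewrite h0 in hs'; exact: hs'.
rewrite e; exact: h0.
Qed.
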